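(* Let $n$ be a positive integer and let $a,b$ be distinct integers with $0<a,b<n$, so that $G=C_{2n}(a,b,n)$ is a $5$-regular circulant graph. If $3$ divides none of the integers $a$, $b$, $2n-a$, $2n-b$, $n$, then $G$ is word-representable.
   Context: Two distinct letters $x,y$ alternate in a word $w$ if, after deleting all other letters from $w$, the resulting word is of the form $xyxy\cdots$ or $yxyx\cdots$ (of even or odd length). A graph $G=(V,E)$ is word-representable if there is a word $w$ over the alphabet $V$, containing every letter of $V$ at least once, such that for all distinct $x,y\in V$, $xy\in E$ if and only if $x$ and $y$ alternate in $w$. For an integer $m$ and a set $R$ of positive integers each at most $m/2$, the circulant graph $C_m(R)$ has vertex set $\{0,1,\dots,m-1\}$, with $i$ and $j$ adjacent iff $\min(|i-j|,\,m-|i-j|)\in R$. $C_{2n}(a,b,n)$ denotes the circulant graph on $2n$ vertices with jump set $\{a,b,n\}$. *)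

(* Defs.v *)
From mathcomp Require Import all_boot.
Set Implicit Arguments. Unset Strict Implicit. Unset Printing Implicit Defensive.

Definition alt_word (V : eqType) (x y : V) (k : nat) : seq V :=
  [seq (if odd i then y else x) | i <- iota 0 k].

Definition alternate (V : eqType) (x y : V) (w : seq V) : Prop :=
  let s := [seq z <- w | (z == x) || (z == y)] in
  s = alt_word x y (size s) \/ s = alt_word y x (size s).

Definition word_representable (V : finType) (E : V -> V -> Prop) : Prop :=
  exists w : seq V,
    (forall v : V, v \in w) /\
    (forall x y : V, x != y -> (E x y <-> alternate x y w)).

(* Circulant graph C_m(R) on {0,...,m-1}: i ~ j iff min(|i-j|, m-|i-j|) \in R. *)
Definition circulant_adj (m : nat) (R : seq nat) (i j : 'I_m) : Prop :=
  let d := ((i - j) + (j - i))%N in minn d (m - d) \in R.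

(* Main.v *)
Require Import Defs.
From mathcomp Require Import all_boot.
Set Implicit Arguments. Unset Strict Implicit. Unset Printing Implicit Defensive.

Definition Pxy (V : eqType) (x y : V) : pred V := fun z => (z == x) || (z == y).

Definition blkg (V : eqType) (e : rel V) (c : V -> nat) (s m : seq V) (v : V) (lo hi : nat) : seq V :=
  if c v == lo then
    [seq u <- s | (c u == lo) && (u != v)] ++ [seq u <- s | (c u == hi) && ~~ e v u]
    ++ m ++ [seq u <- s | (c u == hi) && e v u]
  else [seq u <- s | c u == lo] ++ [seq u <- s | c u == hi].

Definition roundg (V : eqType) (e : rel V) (c : V -> nat) (s m : seq V) (v : V) :=
  blkg e c s m v 0 1 ++ blkg e c s m v 2 0 ++ blkg e c s m v 1 2.

Definition wrd (V : finType) (e : rel V) (c : V -> nat) : seq V :=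
  flatten [seq roundg e c (enum V) [:: v] v | v <- enum V].

Lemma filter_blkg (V : eqType) (e : rel V) c s m v lo hi (P : pred V) :
  filter P (blkg e c s m v lo hi) = blkg e c (filter P s) (filter P m) v lo hi.
Proof.
rewrite /blkg; case: ifP => _; rewrite !filter_cat -!filter_predI;
  by congr (_ ++ _); try congr (_ ++ _); try congr (_ ++ _);
     apply: eq_filter => u /=; rewrite andbC.
Qed.

Lemma filter_roundg (V : eqType) (e : rel V) c s m v (P : pred V) :
  filter P (roundg e c s m v) = roundg e c (filter P s) (filter P m) v.
Proof. by rewrite /roundg !filter_cat !filter_blkg. Qed.

Lemma alt_word2 (V : eqType) (p q : V) k : alt_word p q k.+2 = p :: q :: alt_word p q k.
Proof.
rewrite /alt_word /= -[2]/(2 + 0) iotaDl -map_comp; congr (_ :: _ :: _).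
by apply: eq_map => i /=; rewrite negbK add0n.
Qed.

Lemma alt_flat (V : eqType) (p q : V) (T : Type) (r : seq T) :
  flatten [seq [:: p; q; p; q] | _ <- r] = alt_word p q (size (flatten [seq [:: p; q; p; q] | _ <- r])).
Proof.
elim: r => [|t r IH] //=.
by rewrite !alt_word2 -IH.
Qed.

Lemma nth_alt (V : eqType) (p q d : V) k i : i < k ->
  nth d (alt_word p q k) i = if odd i then q else p.
Proof. by move=> ik; rewrite /alt_word (nth_map 0) ?size_iota // nth_iota. Qed.

Lemma double_not_alt (V : eqType) (p q u : V) s1 s2 : p != q ->
  s1 ++ u :: u :: s2 <> alt_word p q (size (s1 ++ u :: u :: s2)).
Proof.
move=> pq E.
have h1 : nth u (s1 ++ u :: u :: s2) (size s1) = u by rewrite nth_cat ltnn subnn.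
have h2 : nth u (s1 ++ u :: u :: s2) (size s1).+1 = u by rewrite nth_cat ltnNge leqnSn /= subSn // subnn.
rewrite E nth_alt in h1; last by rewrite size_cat /= addnS ltnS leq_addr.
rewrite E nth_alt in h2; last by rewrite size_cat /= !addnS !ltnS leq_addr.
move: h1 h2 => /=; case: (odd (size s1)) => /= h1 h2; by move: pq; rewrite h1 h2 eqxx.
Qed.

Lemma flatten_double (T : eqType) (V : eqType) (f : T -> seq V) (r : seq T) t s1 s2 u :
  t \in r -> f t = s1 ++ u :: u :: s2 ->
  exists t1 t2, flatten (map f r) = t1 ++ u :: u :: t2.
Proof.
elim: r => [|t' r IH] //=; rewrite inE => /orP [/eqP <- ft|tin ft].
  by exists s1, (s2 ++ flatten (map f r)); rewrite ft -catA.
have [t1 [t2 ->]] := IH tin ft.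
by exists (f t' ++ t1), t2; rewrite catA.
Qed.

Lemma not_alternate (V : eqType) (x y : V) w t1 t2 u : x != y ->
  filter (Pxy x y) w = t1 ++ u :: u :: t2 -> ~ alternate x y w.
Proof.
move=> xy E; rewrite /alternate.
have -> : [seq z <- w | (z == x) || (z == y)] = filter (Pxy x y) w by [].
rewrite E => -[]; apply: double_not_alt => //; by rewrite eq_sym.
Qed.

Ltac simp_ne :=
  repeat match goal with
  | H : is_true (?a != ?b) |- context [?a == ?b] => rewrite (negbTE H)
  end.
Ltac crush cx cy :=
  rewrite /roundg /blkg /= ?cx ?cy ?eqxx /=; simp_ne; rewrite /=;
  repeat (match goal with
          | |- context [if ~~ ?b then _ else _] => case: b
          | |- context [if ?a && ?b then _ else _] => case: a
          | |- context [if ?a || ?b then _ else _] => case: a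
          | |- context [if ?b then _ else _] => case: b
          end; rewrite /= ?cx ?cy ?eqxx /=; simp_ne; rewrite /=); try done.

Lemma piece01 (V : eqType) (e : rel V) c s x y v : (s = [:: x; y] \/ s = [:: y; x]) -> x != y ->
  c x = 0 -> c y = 1 ->
  roundg e c s (if Pxy x y v then [:: v] else [::]) v =
  if (v == x) && ~~ e x y then [:: y; x; x; y] else [:: x; y; x; y].
Proof.
move=> hs xy cx cy; rewrite /Pxy.
have yx : y != x by rewrite eq_sym.
case: (eqVneq v x) => [->|vx]; first by case: hs => ->; crush cx cy.
case: (eqVneq v y) => [->|vy]; first by case: hs => ->; crush cx cy.
rewrite /=.
have xv : x != v by rewrite eq_sym.
have yv : y != v by rewrite eq_sym.
case: hs => ->; rewrite /roundg /blkg /= cx cy xv yv /=; crush cx cy.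
Qed.

Lemma piece20 (V : eqType) (e : rel V) c s x y v : (s = [:: x; y] \/ s = [:: y; x]) -> x != y ->
  c x = 2 -> c y = 0 ->
  roundg e c s (if Pxy x y v then [:: v] else [::]) v =
  if (v == x) && ~~ e x y then [:: y; y; x; x] else [:: y; x; y; x].
Proof.
move=> hs xy cx cy; rewrite /Pxy.
have yx : y != x by rewrite eq_sym.
case: (eqVneq v x) => [->|vx]; first by case: hs => ->; crush cx cy.
case: (eqVneq v y) => [->|vy]; first by case: hs => ->; crush cx cy.
rewrite /=.
have xv : x != v by rewrite eq_sym.
have yv : y != v by rewrite eq_sym.
case: hs => ->; rewrite /roundg /blkg /= cx cy xv yv /=; crush cx cy.
Qed.

Lemma piece12 (V : eqType) (e : rel V) c s x y v : (s = [:: x; y] \/ s = [:: y; x]) -> x != y ->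
  c x = 1 -> c y = 2 ->
  roundg e c s (if Pxy x y v then [:: v] else [::]) v =
  if (v == x) && ~~ e x y then [:: x; y; y; x] else [:: x; y; x; y].
Proof.
move=> hs xy cx cy; rewrite /Pxy.
have yx : y != x by rewrite eq_sym.
case: (eqVneq v x) => [->|vx]; first by case: hs => ->; crush cx cy.
case: (eqVneq v y) => [->|vy]; first by case: hs => ->; crush cx cy.
rewrite /=.
have xv : x != v by rewrite eq_sym.
have yv : y != v by rewrite eq_sym.
case: hs => ->; rewrite /roundg /blkg /= cx cy xv yv /=; crush cx cy.
Qed.

Lemma piece_same (V : eqType) (e : rel V) c x y : x != y -> c x = c y -> c x < 3 ->
  roundg e c [:: x; y] (if Pxy x y x then [:: x] else [::]) x = [:: y; x; x; y] \/
  roundg e c [:: x; y] (if Pxy x y x then [:: x] else [::]) x = [:: x; y; y; x].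
Proof.
move=> xy cxy c3; rewrite /Pxy eqxx /=.
have yx : y != x by rewrite eq_sym.
have: c x = 0 \/ c x = 1 \/ c x = 2 by move: c3; case: (c x) => [|[|[|]]]; auto.
case=> [cx|[cx|cx]]; have cy := cxy; rewrite cx in cy; move: cy => /esym cy.
- by left; crush cx cy.
- by right; crush cx cy.
- by left; crush cx cy.
Qed.

Lemma Ebar2 (V : finType) (x y : V) : x != y ->
  filter (Pxy x y) (enum V) = [:: x; y] \/ filter (Pxy x y) (enum V) = [:: y; x].
Proof.
move=> xy.
have u1 : uniq (filter (Pxy x y) (enum V)) by rewrite filter_uniq ?enum_uniq.
have u2 : uniq [:: x; y] by rewrite /= inE xy.
have pe : perm_eq (filter (Pxy x y) (enum V)) [:: x; y].
  apply: uniq_perm => // u; by rewrite mem_filter mem_enum andbT !inE.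
have sz := perm_size pe.
have mem := perm_mem pe.
move: u1 sz mem; case: (filter (Pxy x y) (enum V)) => [|a [|b [|]]] //= ua _ mem.
have ha : a \in [:: x; y] by rewrite -mem !inE eqxx.
have hb : b \in [:: x; y] by rewrite -mem !inE eqxx orbT.
move: ua ha hb; rewrite !inE andbT => ua /orP[/eqP ha|/eqP ha] /orP[/eqP hb|/eqP hb];
  rewrite ha hb ?eqxx in ua *; auto; by [].
Qed.

Lemma alternate_sym (V : eqType) (x y : V) w : alternate x y w <-> alternate y x w.
Proof.
rewrite /alternate.
have -> : [seq z <- w | (z == y) || (z == x)] = [seq z <- w | (z == x) || (z == y)].
  by apply: eq_filter => z; rewrite orbC.
by split; case; auto.
Qed.

Lemma filter_wrd (V : finType) (e : rel V) c x y :
  filter (Pxy x y) (wrd e c) =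
  flatten [seq roundg e c (filter (Pxy x y) (enum V)) (if Pxy x y v then [:: v] else [::]) v | v <- enum V].
Proof.
rewrite /wrd filter_flatten -map_comp; congr flatten; apply: eq_map => v /=.
by rewrite filter_roundg.
Qed.

Lemma cross_gen (V : finType) (e : rel V) c x y p q D : x != y ->
  ((p == x) && (q == y)) || ((p == y) && (q == x)) ->
  (exists t1 t2 u, D = t1 ++ u :: u :: t2) ->
  (forall v, roundg e c (filter (Pxy x y) (enum V)) (if Pxy x y v then [:: v] else [::]) v =
     if (v == x) && ~~ e x y then D else [:: p; q; p; q]) ->
  (e x y <-> alternate x y (wrd e c)).
Proof.
move=> xy pq [t1 [t2 [u hD]]] hv.
have key := filter_wrd e c x y.
split=> [exy|].
- have : filter (Pxy x y) (wrd e c) = flatten [seq [:: p; q; p; q] | _ <- enum V].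
    by rewrite key; congr flatten; apply: eq_map => v; rewrite hv exy andbF.
  rewrite /alternate; have -> : [seq z <- wrd e c | (z == x) || (z == y)] = filter (Pxy x y) (wrd e c) by [].
  move=> ->.
  by case/orP: pq => /andP [/eqP hp /eqP hq]; rewrite -hp -hq; [left|right]; exact: alt_flat.
- move=> halt; case nexy: (e x y) => //; exfalso.
  have [s1 [s2 hf]] : exists s1 s2, filter (Pxy x y) (wrd e c) = s1 ++ u :: u :: s2.
    rewrite key; apply: (flatten_double (t := x) (s1 := t1) (s2 := t2)); first by rewrite mem_enum.
    by rewrite hv eqxx /= nexy hD.
  exact: not_alternate xy hf halt.
Qed.

Lemma same_gen' (V : finType) (e : rel V) c x y : x != y -> c x = c y -> c x < 3 ->
  filter (Pxy x y) (enum V) = [:: x; y] -> ~ alternate x y (wrd e c).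
Proof.
move=> xy cxy c3 hE.
have [s1 [s2 [u hf]]] : exists s1 s2 u, filter (Pxy x y) (wrd e c) = s1 ++ u :: u :: s2.
  rewrite filter_wrd.
  have [h|h] := piece_same e xy cxy c3.
  - have [t1 [t2 ->]] := flatten_double (t := x) (s1 := [:: y]) (s2 := [:: y])
      (f := fun v => roundg e c (filter (Pxy x y) (enum V)) (if Pxy x y v then [:: v] else [::]) v)
      (r := enum V) (mem_enum _ x) (ltac:(by rewrite /= hE h)).
    by eauto.
  - have [t1 [t2 ->]] := flatten_double (t := x) (s1 := [:: x]) (s2 := [:: x])
      (f := fun v => roundg e c (filter (Pxy x y) (enum V)) (if Pxy x y v then [:: v] else [::]) v)
      (r := enum V) (mem_enum _ x) (ltac:(by rewrite /= hE h)).
    by eauto.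
exact: not_alternate xy hf.
Qed.

Lemma three_col (V : finType) (e : rel V) (c : V -> nat) :
  (forall x y, e x y = e y x) -> (forall x, c x < 3) -> (forall x y, e x y -> c x != c y) ->
  forall x y, x != y -> (e x y <-> alternate x y (wrd e c)).
Proof.
move=> esymm c3 col.
have same : forall x y, x != y -> c x = c y -> (e x y <-> alternate x y (wrd e c)).
  move=> x y xy cxy; split=> [exy|halt]; first by move: (col _ _ exy); rewrite cxy eqxx.
  exfalso; case: (Ebar2 xy) => hE.
  - exact: same_gen' xy cxy (c3 x) hE halt.
  - have yx : y != x by rewrite eq_sym.
    have hE' : filter (Pxy y x) (enum V) = [:: y; x].
      by rewrite -hE; apply: eq_filter => z; rewrite /Pxy orbC.
    apply: (same_gen' (e := e) yx (esym cxy) _ hE'); first by rewrite -cxy.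
    by apply/alternate_sym.
have c01 : forall x y, x != y -> c x = 0 -> c y = 1 -> (e x y <-> alternate x y (wrd e c)).
  move=> x y xy cx cy; apply: (cross_gen (p := x) (q := y) (D := [:: y; x; x; y])) => //.
  - by rewrite !eqxx.
  - by exists [:: y], [:: y], x.
  - by move=> v; apply: piece01 => //; apply: Ebar2.
have c20 : forall x y, x != y -> c x = 2 -> c y = 0 -> (e x y <-> alternate x y (wrd e c)).
  move=> x y xy cx cy; apply: (cross_gen (p := y) (q := x) (D := [:: y; y; x; x])) => //.
  - by rewrite !eqxx orbT.
  - by exists [::], [:: x; x], y.
  - by move=> v; apply: piece20 => //; apply: Ebar2.
have c12 : forall x y, x != y -> c x = 1 -> c y = 2 -> (e x y <-> alternate x y (wrd e c)).
  move=> x y xy cx cy; apply: (cross_gen (p := x) (q := y) (D := [:: x; y; y; x])) => //.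
  - by rewrite !eqxx.
  - by exists [:: x], [:: x], y.
  - by move=> v; apply: piece12 => //; apply: Ebar2.
have swap : forall x y, x != y -> (e y x <-> alternate y x (wrd e c)) -> (e x y <-> alternate x y (wrd e c)).
  move=> x y xy h; rewrite esymm; split=> H.
    by apply/alternate_sym; apply/h.
  by apply/h; apply/alternate_sym.
move=> x y xy.
have yx : y != x by rewrite eq_sym.
have h3 : forall z, c z = 0 \/ c z = 1 \/ c z = 2.
  by move=> z; move: (c3 z); case: (c z) => [|[|[|]]]; auto.
case: (h3 x) => [cx|[cx|cx]]; case: (h3 y) => [cy|[cy|cy]];
  try (apply: same => //; by rewrite cx cy).
- exact: c01.
- by apply: swap => //; apply: c20.
- by apply: swap => //; apply: c01.
- exact: c12.
- exact: c20.
- by apply: swap => //; apply: c12.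
Qed.

Lemma wrd_all (V : finType) (e : rel V) (c : V -> nat) :
  (forall x, c x < 3) -> forall v : V, v \in wrd e c.
Proof.
move=> c3 v; apply/flatten_mapP; exists v; first by rewrite mem_enum.
rewrite /roundg /blkg !mem_cat.
have: c v = 0 \/ c v = 1 \/ c v = 2 by move: (c3 v); case: (c v) => [|[|[|]]]; auto.
by case=> [->|[->|->]]; rewrite /= !mem_cat inE eqxx /= ?orbT.
Qed.

From mathcomp Require Import zify.

Theorem theorem20 (n a b : nat) :
  0 < n -> a != b -> 0 < a < n -> 0 < b < n ->
  ~~ (3 %| a) -> ~~ (3 %| b) -> ~~ (3 %| n.*2 - a) -> ~~ (3 %| n.*2 - b) ->
  ~~ (3 %| n) ->
  word_representable (@circulant_adj n.*2 [:: a; b; n]).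
Proof.
move=> n0 ab ha hb h3a h3b h3a' h3b' h3n.
pose e : rel 'I_(n.*2) := fun i j =>
  let d := ((i - j) + (j - i))%N in minn d (n.*2 - d) \in [:: a; b; n].
pose c : 'I_(n.*2) -> nat := fun i => val i %% 3.
have esymm : forall x y, e x y = e y x by move=> x y; rewrite /e addnC.
have c3 : forall x, c x < 3 by move=> x; rewrite /c ltn_pmod.
have col : forall x y, e x y -> c x != c y.
  move=> [x hx] [y hy]; rewrite /e /c /= !inE => H; apply/eqP => hxy.
  move: H; case/or3P => /eqP hm; move: hm; rewrite /minn; case: ifP => _ hm; lia.
exists (wrd e c); split; first exact: wrd_all.
move=> x y xy; exact: (three_col esymm c3 col xy).
Qed.
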